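(* For $(a,b)\in\mathbb{R}^2$, let $\mathfrak{g}_{a,b}$ be the $8$-dimensional real nilpotent Lie algebra with a basis $\{e^1,\dots,e^8\}$ of its dual satisfying $$de^1=de^2=de^3=0,\quad de^4=e^{13},\quad de^5=e^{23},\quad de^6=3e^{14}+e^{25}-2e^{35},$$ $$de^7=2a\,e^{12}+e^{15}+e^{24}+2e^{34},\quad de^8=-2b\,e^{14}+e^{16}-2b\,e^{25}+e^{27}-2e^{45}.$$ If $\mathfrak{g}_{a,b}$ and $\mathfrak{g}_{a',b'}$ are isomorphic, then there is a non-zero real number $\rho$ such that $a'=\pm\rho a$ and $b'=\rho b$.
   Context: $e^{ij}=e^i\wedge e^j$, and $d$ denotes the Chevalley–Eilenberg differential, $d\alpha(X,Y)=-\alpha([X,Y])$ for $\alpha\in\mathfrak{g}^*$; these equations define the Lie bracket. *)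

(* Defs.v *)
From mathcomp Require Import all_boot all_order all_algebra.
From mathcomp Require Import reals.
Set Implicit Arguments. Unset Strict Implicit. Unset Printing Implicit Defensive.
Import Order.TTheory GRing.Theory Num.Theory.
Local Open Scope ring_scope.

Section LieAlg.
Variable R : realType.

(* index i : 'I_8 stands for the paper's index i+1 *)
Definition ix (n : nat) : 'I_8 := inord n.

(* e^{ij} = e^i /\ e^j as the antisymmetric matrix of its values:
   (e^{ij})(e_p, e_q) = M p q *)
Definition wedge (i j : nat) : 'M[R]_8 := delta_mx (ix i) (ix j) - delta_mx (ix j) (ix i).

(* dform a b k = d e^(k+1), as an antisymmetric matrix of values on basis pairs *)
Definition dform (a b : R) (k : 'I_8) : 'M[R]_8 :=
  match val k with
  | 3 => wedge 0 2
  | 4 => wedge 1 2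
  | 5 => 3 *: wedge 0 3 + wedge 1 4 - 2 *: wedge 2 4
  | 6 => (2 * a) *: wedge 0 1 + wedge 0 4 + wedge 1 3 + 2 *: wedge 2 3
  | 7 => (- (2 * b)) *: wedge 0 3 + wedge 0 5 - (2 * b) *: wedge 1 4
         + wedge 1 6 - 2 *: wedge 3 4
  | _ => 0
  end.

(* Lie bracket of g_{a,b} on row vectors (coordinates in the basis e_1..e_8
   dual to e^1..e^8): e^k([x,y]) = - d e^k (x, y). *)
Definition lie (a b : R) (x y : 'rV[R]_8) : 'rV[R]_8 :=
  \row_k (- (x *m dform a b k *m y^T) 0 0).

Definition lie_isomorphic (a b a' b' : R) : Prop :=
  exists f : 'M[R]_8, f \in unitmx /\
    forall x y : 'rV[R]_8, lie a' b' (x *m f) (y *m f) = lie a b x y *m f.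

End LieAlg.

(* Main.v *)
Require Import Defs.
From mathcomp Require Import all_boot all_order all_algebra.
From mathcomp Require Import reals.
From mathcomp Require Import ring lra.
Import Order.TTheory GRing.Theory Num.Theory.
Local Open Scope ring_scope.

Lemma canc {R : realType} {t x : R} : t != 0 -> t * x = 0 -> x = 0.
Proof. by move=> tn /eqP; rewrite mulf_eq0 (negbTE tn) /= => /eqP. Qed.

Lemma alg (R : realType) (a b a' b' f00 f01 f03 f04 f10 f11 f13 f14 f20 f21 f22 f23 f24 f33 f34 f35 f36 f43 f44 f45 f46 f55 f56 f57 f65 f66 f67 f77 g00 g01 g10 g11 g22 : R)
  (P00 : f00 * g00 + f01 * g10 = 1) (P10 : f10 * g00 + f11 * g10 = 0)
  (P01 : f00 * g01 + f01 * g11 = 0) (P11 : f10 * g01 + f11 * g11 = 1)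
  (Q22 : g22 * f22 = 1)
  (E023 : (1) * f00 * f22 - (1) * f33 = 0)
  (E024 : (1) * f01 * f22 - (1) * f34 = 0)
  (E123 : (1) * f10 * f22 - (1) * f43 = 0)
  (E124 : (1) * f11 * f22 - (1) * f44 = 0)
  (E035 : (3) * f00 * f33 + (1) * f01 * f34 - (3) * f55 = 0)
  (E145 : (3) * f10 * f43 + (1) * f11 * f44 - (1) * f55 = 0)
  (E036 : (1) * f00 * f34 + (1) * f01 * f33 - (3) * f56 = 0)
  (E146 : (1) * f10 * f44 + (1) * f11 * f43 - (1) * f56 = 0)
  (E045 : (3) * f00 * f43 + (1) * f01 * f44 - (1) * f65 = 0)
  (E046 : (1) * f00 * f44 + (1) * f01 * f43 - (1) * f66 = 0)
  (E235 : (3) * f20 * f33 + (1) * f21 * f34 - (2) * f22 * f34 - (2) * f65 = 0)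
  (E236 : (1) * f20 * f34 + (1) * f21 * f33 + (2) * f22 * f33 - (2) * f66 = 0)
  (E245 : (3) * f20 * f43 + (1) * f21 * f44 - (2) * f22 * f44 + (2) * f55 = 0)
  (E246 : (1) * f20 * f44 + (1) * f21 * f43 + (2) * f22 * f43 + (2) * f56 = 0)
  (E257 : (1) * f20 * f55 + (1) * f21 * f56 = 0)
  (E267 : (1) * f20 * f65 + (1) * f21 * f66 = 0)
  (E057 : (1) * f00 * f55 + (1) * f01 * f56 - (1) * f77 = 0)
  (E157 : (1) * f10 * f55 + (1) * f11 * f56 = 0)
  (E067 : (1) * f00 * f65 + (1) * f01 * f66 = 0)
  (E167 : (1) * f10 * f65 + (1) * f11 * f66 - (1) * f77 = 0)
  (E347 : - (2) * f33 * f44 + (2) * f34 * f43 + (2) * f77 = 0)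
  (E015 : - (2) * a * f65 + (3) * f00 * f13 + (1) * f01 * f14 - (3) * f03 * f10 - (1) * f04 * f11 = 0)
  (E037 : (2) * b * f77 - (2) * b' * f00 * f33 - (2) * b' * f01 * f34 + (1) * f00 * f35 + (1) * f01 * f36 - (2) * f03 * f34 + (2) * f04 * f33 - (3) * f57 = 0)
  (E025 : (3) * f00 * f23 + (1) * f01 * f24 - (3) * f03 * f20 - (1) * f04 * f21 + (2) * f04 * f22 - (1) * f35 = 0)
  (E247 : - (2) * b' * f20 * f43 - (2) * b' * f21 * f44 + (1) * f20 * f45 + (1) * f21 * f46 - (2) * f23 * f44 + (2) * f24 * f43 + (2) * f57 = 0)
  (E147 : (2) * b * f77 - (2) * b' * f10 * f43 - (2) * b' * f11 * f44 + (1) * f10 * f45 + (1) * f11 * f46 - (2) * f13 * f44 + (2) * f14 * f43 - (1) * f57 = 0)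
  (E126 : (2) * a' * f10 * f21 - (2) * a' * f11 * f20 + (1) * f10 * f24 + (1) * f11 * f23 - (1) * f13 * f21 - (2) * f13 * f22 - (1) * f14 * f20 - (1) * f46 = 0)
  (E016 : - (2) * a * f66 + (2) * a' * f00 * f11 - (2) * a' * f01 * f10 + (1) * f00 * f14 + (1) * f01 * f13 - (1) * f03 * f11 - (1) * f04 * f10 = 0)
  (E047 : - (2) * b' * f00 * f43 - (2) * b' * f01 * f44 + (1) * f00 * f45 + (1) * f01 * f46 - (2) * f03 * f44 + (2) * f04 * f43 - (1) * f67 = 0)
  (E125 : (3) * f10 * f23 + (1) * f11 * f24 - (3) * f13 * f20 - (1) * f14 * f21 + (2) * f14 * f22 - (1) * f45 = 0)
  (E237 : - (2) * b' * f20 * f33 - (2) * b' * f21 * f34 + (1) * f20 * f35 + (1) * f21 * f36 - (2) * f23 * f34 + (2) * f24 * f33 - (2) * f67 = 0)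
  : exists rho : R, rho != 0 /\ (a' = rho * a \/ a' = - (rho * a)) /\ b' = rho * b.
Proof.
have tnz : f22 != 0.
  by apply/eqP => h; move: Q22; rewrite h mulr0 => /eqP; rewrite eq_sym oner_eq0.
have dnz : f00 * f11 - f01 * f10 != 0.
  have : (f00 * f11 - f01 * f10) * (g00 * g11 - g01 * g10) =
    (f00 * g00 + f01 * g10) * (f10 * g01 + f11 * g11) - (f00 * g01 + f01 * g11) * (f10 * g00 + f11 * g10) by ring.
  rewrite P00 P11 P01 P10 mul0r subr0 mul1r => h.
  by apply/eqP => h0; move: h; rewrite h0 mul0r => /eqP; rewrite eq_sym oner_eq0.
have s33 : f33 = f00 * f22 by clear -E023; lra.
have s34 : f34 = f01 * f22 by clear -E024; lra.
have s43 : f43 = f10 * f22 by clear -E123; lra.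
have s44 : f44 = f11 * f22 by clear -E124; lra.
subst f33 f34 f43 f44.
have s77 : f77 = f22 * f22 * (f00 * f11 - f01 * f10) by clear -E347; lra.
subst f77.
have e1 : f00 * f55 + f01 * f56 = f22 * f22 * (f00 * f11 - f01 * f10) by clear -E057; lra.
have e2 : f10 * f65 + f11 * f66 = f22 * f22 * (f00 * f11 - f01 * f10) by clear -E167; lra.
have e3 : f00 * f65 + f01 * f66 = 0 by clear -E067; lra.
have e4 : f10 * f55 + f11 * f56 = 0 by clear -E157; lra.
have e5 : f20 * f55 + f21 * f56 = 0 by clear -E257; lra.
have e6 : f20 * f65 + f21 * f66 = 0 by clear -E267; lra.
have f77nz : f22 * f22 * (f00 * f11 - f01 * f10) != 0 by rewrite !mulf_neq0.
have Nnz : f55 * f66 - f56 * f65 != 0.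
  have : (f00 * f11 - f01 * f10) * (f55 * f66 - f56 * f65) =
    (f00 * f55 + f01 * f56) * (f10 * f65 + f11 * f66) - (f00 * f65 + f01 * f66) * (f10 * f55 + f11 * f56) by ring.
  rewrite e1 e2 e3 e4 mul0r subr0 => h.
  apply/eqP => h0; move: h; rewrite h0 mulr0 => /esym /eqP; rewrite mulf_eq0 orbb.
  by rewrite (negbTE f77nz).
have u0 : f20 = 0.
  apply: (canc Nnz).
  have -> : (f55 * f66 - f56 * f65) * f20 = f66 * (f20 * f55 + f21 * f56) - f56 * (f20 * f65 + f21 * f66) by ring.
  by rewrite e5 e6 !mulr0 subr0.
have v0 : f21 = 0.
  apply: (canc Nnz).
  have -> : (f55 * f66 - f56 * f65) * f21 = f55 * (f20 * f65 + f21 * f66) - f65 * (f20 * f55 + f21 * f56) by ring.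
  by rewrite e5 e6 !mulr0 subr0.
subst f20 f21.
have s55 : f55 = 3 * f10 * (f10 * f22) + f11 * (f11 * f22) by clear -E145; lra.
have s56 : f56 = f10 * (f11 * f22) + f11 * (f10 * f22) by clear -E146; lra.
have s65 : f65 = 3 * f00 * (f10 * f22) + f01 * (f11 * f22) by clear -E045; lra.
have s66 : f66 = f00 * (f11 * f22) + f01 * (f10 * f22) by clear -E046; lra.
subst f55 f56 f65 f66.
have h1 : 3 * f10 * f10 + f11 * f11 - f11 * f22 = 0.
  by apply: (canc tnz); clear -E245; lra.
have h2 : f10 * (f22 + 2 * f11) = 0.
  by apply: (canc tnz); clear -E246; lra.
have r0 : f10 = 0.
  have h3 : f10 * f10 * (f10 * f10 + f11 * f11) = 0.
    apply: (canc (t:=3)); first by rewrite pnatr_eq0.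
    have -> : 3 * (f10 * f10 * (f10 * f10 + f11 * f11)) = f10 * f10 * (3 * f10 * f10 + f11 * f11 - f11 * f22) + f10 * f11 * (f10 * (f22 + 2 * f11)) by ring.
    by rewrite h1 h2 !mulr0 addr0.
  move/eqP: h3; rewrite mulf_eq0 => /orP[]; first by rewrite mulf_eq0 orbb => /eqP.
  by move=> /eqP h; clear -h; nra.
subst f10.
clear e1 e2 e3 e4 e5 e6 Nnz f77nz h2.
have snz : f11 != 0 by apply: contraNneq dnz => ->; rewrite mulr0 mulr0 subr0.
have pnz : f00 != 0 by apply: contraNneq dnz => ->; rewrite mul0r mulr0 subr0.
have hs : f11 - f22 = 0 by apply: (canc snz); clear -h1; lra.
have st : f11 = f22 by clear -hs; lra.
subst f11.
have q0 : f01 = 0 by do 2 apply: (canc tnz); clear -E235; lra.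
subst f01.
have hp : (f00 - f22) * (f00 + f22) = 0 by apply: (canc tnz); clear -E035; lra.
have s35 : f35 = 3 * f00 * f23 + 2 * f04 * f22 by clear -E025; lra.
have s57 : f57 = f23 * (f22 * f22) by clear -E247; lra.
have s46 : f46 = f22 * f23 - 2 * f13 * f22 by clear -E126; lra.
have s45 : f45 = f22 * f24 + 2 * f14 * f22 by clear -E125; lra.
have s67 : f67 = f00 * f22 * f24 by clear -E237; lra.
subst f35 f57 f46 f45 f67.
move/eqP: hp; rewrite mulf_eq0 => /orP[] /eqP hp.
  have e : f00 = f22 by clear -hp; lra.
  subst f00.
  have h04 : f04 - 3 * f13 = 0 by apply: (canc tnz); clear -E015; lra.
  have e4 : f04 = 3 * f13 by clear -h04; lra.
  subst f04.
  have e13 : f13 = 0 by do 2 apply: (canc tnz); clear -E037 E147; lra.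
  subst f13.
  have hb : b' - f22 * b = 0 by do 3 apply: (canc tnz); clear -E147; lra.
  have h03 : f14 - f03 = 0 by do 2 apply: (canc tnz); clear -E047; lra.
  have e3 : f03 = f14 by clear -h03; lra.
  subst f03.
  have ha : a' - f22 * a = 0 by do 2 apply: (canc tnz); clear -E016; lra.
  exists f22; split => //; split; [left|]; clear -ha hb; lra.
have e : f00 = - f22 by clear -hp; lra.
subst f00.
have h04 : f04 + 3 * f13 = 0 by apply: (canc tnz); clear -E015; lra.
have e4 : f04 = - 3 * f13 by clear -h04; lra.
subst f04.
have e13 : f13 = 0 by do 2 apply: (canc tnz); clear -E037 E147; lra.
subst f13.
have hb : b' + f22 * b = 0 by do 3 apply: (canc tnz); clear -E147; lra.
have h03 : f14 + f03 = 0 by do 2 apply: (canc tnz); clear -E047; lra.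
have e3 : f03 = - f14 by clear -h03; lra.
subst f03.
have ha : a' - f22 * a = 0 by do 2 apply: (canc tnz); clear -E016; lra.
exists (- f22); split; first by rewrite oppr_eq0.
split; [right|]; clear -ha hb; lra.
Qed.

Set Implicit Arguments. Unset Strict Implicit. Unset Printing Implicit Defensive.

Section S.
Variable R : realType.
Implicit Types (a b : R) (x y : 'rV[R]_8).

Lemma ixK n : (n < 8)%N -> val (ix n) = n.
Proof. by move=> h; apply: inordK. Qed.

Lemma eqix n m : (n < 8)%N -> (m < 8)%N -> (ix n == ix m) = (n == m).
Proof. by move=> hn hm; rewrite -val_eqE /= !ixK. Qed.

Definition X x (n : nat) : R := x 0 (ix n).
Definition qf a b (k : nat) x y : R := (x *m dform a b (ix k) *m y^T) 0 0.
Definition Fe (f : 'M[R]_8) (i j : nat) : R := f (ix i) (ix j).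
Arguments qf : simpl never.
Arguments X : simpl never.
Arguments Fe : simpl never.

Lemma qd x y (i j : 'I_8) : (x *m delta_mx i j *m y^T) 0 0 = x 0 i * y 0 j.
Proof.
rewrite !mxE (bigD1 j) //= big1 ?addr0.
  rewrite !mxE (bigD1 i) //= big1 ?addr0; first by rewrite !mxE !eqxx mulr1.
  by move=> k /negbTE hk; rewrite !mxE hk /= mulr0.
move=> k /negbTE hk; rewrite !mxE big1 ?mul0r // => l _.
by rewrite !mxE hk andbF mulr0.
Qed.

Lemma qD x y (A B : 'M[R]_8) : (x *m (A + B) *m y^T) 0 0 = (x *m A *m y^T) 0 0 + (x *m B *m y^T) 0 0.
Proof. by rewrite mulmxDr mulmxDl mxE. Qed.
Lemma qN x y (A : 'M[R]_8) : (x *m (- A) *m y^T) 0 0 = - (x *m A *m y^T) 0 0.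
Proof. by rewrite mulmxN mulNmx mxE. Qed.
Lemma qB x y (A B : 'M[R]_8) : (x *m (A - B) *m y^T) 0 0 = (x *m A *m y^T) 0 0 - (x *m B *m y^T) 0 0.
Proof. by rewrite qD qN. Qed.
Lemma qZ x y c (A : 'M[R]_8) : (x *m (c *: A) *m y^T) 0 0 = c * (x *m A *m y^T) 0 0.
Proof. by rewrite -scalemxAr -scalemxAl mxE. Qed.
Lemma qw x y i j : (x *m wedge R i j *m y^T) 0 0 = X x i * X y j - X x j * X y i.
Proof. by rewrite /wedge qB !qd. Qed.

Lemma qf3 a b x y : qf a b 3 x y = X x 0 * X y 2 - X x 2 * X y 0.
Proof. by rewrite /qf /dform ixK // qw. Qed.
Lemma qf4 a b x y : qf a b 4 x y = X x 1 * X y 2 - X x 2 * X y 1.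
Proof. by rewrite /qf /dform ixK // qw. Qed.
Lemma qf5 a b x y : qf a b 5 x y = 3 * (X x 0 * X y 3 - X x 3 * X y 0)
   + (X x 1 * X y 4 - X x 4 * X y 1) - 2 * (X x 2 * X y 4 - X x 4 * X y 2).
Proof.
rewrite /qf /dform ixK //.
move: (qw x y 0 3) (qw x y 1 4) (qw x y 2 4); move: (wedge R 0 3) (wedge R 1 4) (wedge R 2 4) => w0 w1 w2 h0 h1 h2.
by rewrite ?qD ?qB ?qN ?qZ h0 h1 h2.
Qed.
Lemma qf6 a b x y : qf a b 6 x y = 2 * a * (X x 0 * X y 1 - X x 1 * X y 0)
   + (X x 0 * X y 4 - X x 4 * X y 0) + (X x 1 * X y 3 - X x 3 * X y 1)
   + 2 * (X x 2 * X y 3 - X x 3 * X y 2).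
Proof.
rewrite /qf /dform ixK //.
move: (qw x y 0 1) (qw x y 0 4) (qw x y 1 3) (qw x y 2 3); move: (wedge R 0 1) (wedge R 0 4) (wedge R 1 3) (wedge R 2 3) => w0 w1 w2 w3 h0 h1 h2 h3.
by rewrite ?qD ?qB ?qN ?qZ h0 h1 h2 h3.
Qed.
Lemma qf7 a b x y : qf a b 7 x y = - (2 * b) * (X x 0 * X y 3 - X x 3 * X y 0)
   + (X x 0 * X y 5 - X x 5 * X y 0) - 2 * b * (X x 1 * X y 4 - X x 4 * X y 1)
   + (X x 1 * X y 6 - X x 6 * X y 1) - 2 * (X x 3 * X y 4 - X x 4 * X y 3).
Proof.
rewrite /qf /dform ixK //.
move: (qw x y 0 3) (qw x y 0 5) (qw x y 1 4) (qw x y 1 6) (qw x y 3 4); move: (wedge R 0 3) (wedge R 0 5) (wedge R 1 4) (wedge R 1 6) (wedge R 3 4) => w0 w1 w2 w3 w4 h0 h1 h2 h3 h4.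
by rewrite ?qD ?qB ?qN ?qZ h0 h1 h2 h3 h4.
Qed.
Lemma qf0 a b x y : qf a b 0 x y = 0.
Proof. by rewrite /qf /dform ixK // mulmx0 mul0mx mxE. Qed.
Lemma qf1 a b x y : qf a b 1 x y = 0.
Proof. by rewrite /qf /dform ixK // mulmx0 mul0mx mxE. Qed.
Lemma qf2 a b x y : qf a b 2 x y = 0.
Proof. by rewrite /qf /dform ixK // mulmx0 mul0mx mxE. Qed.


Definition iso a b a' b' (f : 'M[R]_8) :=
  forall x y, lie a' b' (x *m f) (y *m f) = lie a b x y *m f.
Definition ev (i : nat) : 'rV[R]_8 := delta_mx 0 (ix i).

Lemma key a b a' b' f : iso a b a' b' f -> forall i j k,
  qf a' b' k (row (ix i) f) (row (ix j) f) =
  \sum_(n < 8) qf a b n (ev i) (ev j) * Fe f n k.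
Proof.
move=> H i j k.
have E := congr1 (fun M : 'rV[R]_8 => M 0 (ix k)) (H (ev i) (ev j)).
move: E => /=.
have -> : lie a' b' (ev i *m f) (ev j *m f) 0 (ix k) = - qf a' b' k (row (ix i) f) (row (ix j) f).
  by rewrite /lie mxE /qf !rowE.
have -> : (lie a b (ev i) (ev j) *m f) 0 (ix k) = \sum_(n<8) - (qf a b n (ev i) (ev j) * Fe f n k).
  rewrite mxE; apply: eq_bigr => n _.
  by rewrite /lie mxE /qf /Fe /ix inord_val mulNr.
by rewrite sumrN => /oppr_inj.
Qed.

Lemma Xrow f i n : X (row (ix i) f) n = Fe f i n.
Proof. by rewrite /X /Fe mxE. Qed.
Lemma Xev i n : (i < 8)%N -> (n < 8)%N -> X (ev i) n = (i == n)%:R.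
Proof. by move=> hi hn; rewrite /X /ev mxE eqix // eqxx eq_sym. Qed.

Lemma zero3 a b a' b' f : iso a b a' b' f -> forall i j, (3 <= i < 8)%N -> (j < 3)%N -> Fe f i j = 0.
Proof.
move=> H.
have E020 : - (1) * Fe f 3 0 = 0.
  move: (key H 0 2 0); rewrite !big_ord_recr big_ord0 /= ?qf0 ?qf1 ?qf2 ?qf3 ?qf4 ?qf5 ?qf6 ?qf7 ?Xrow ?Xev //=.
  move=> E; lra.

have E120 : - (1) * Fe f 4 0 = 0.
  move: (key H 1 2 0); rewrite !big_ord_recr big_ord0 /= ?qf0 ?qf1 ?qf2 ?qf3 ?qf4 ?qf5 ?qf6 ?qf7 ?Xrow ?Xev //=.
  move=> E; lra.

have E030 : (2) * b * Fe f 7 0 - (3) * Fe f 5 0 = 0.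
  move: (key H 0 3 0); rewrite !big_ord_recr big_ord0 /= ?qf0 ?qf1 ?qf2 ?qf3 ?qf4 ?qf5 ?qf6 ?qf7 ?Xrow ?Xev //=.
  move=> E; lra.

have E040 : - (1) * Fe f 6 0 = 0.
  move: (key H 0 4 0); rewrite !big_ord_recr big_ord0 /= ?qf0 ?qf1 ?qf2 ?qf3 ?qf4 ?qf5 ?qf6 ?qf7 ?Xrow ?Xev //=.
  move=> E; lra.

have E050 : - (1) * Fe f 7 0 = 0.
  move: (key H 0 5 0); rewrite !big_ord_recr big_ord0 /= ?qf0 ?qf1 ?qf2 ?qf3 ?qf4 ?qf5 ?qf6 ?qf7 ?Xrow ?Xev //=.
  move=> E; lra.

have E021 : - (1) * Fe f 3 1 = 0.
  move: (key H 0 2 1); rewrite !big_ord_recr big_ord0 /= ?qf0 ?qf1 ?qf2 ?qf3 ?qf4 ?qf5 ?qf6 ?qf7 ?Xrow ?Xev //=.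
  move=> E; lra.

have E121 : - (1) * Fe f 4 1 = 0.
  move: (key H 1 2 1); rewrite !big_ord_recr big_ord0 /= ?qf0 ?qf1 ?qf2 ?qf3 ?qf4 ?qf5 ?qf6 ?qf7 ?Xrow ?Xev //=.
  move=> E; lra.

have E031 : (2) * b * Fe f 7 1 - (3) * Fe f 5 1 = 0.
  move: (key H 0 3 1); rewrite !big_ord_recr big_ord0 /= ?qf0 ?qf1 ?qf2 ?qf3 ?qf4 ?qf5 ?qf6 ?qf7 ?Xrow ?Xev //=.
  move=> E; lra.

have E041 : - (1) * Fe f 6 1 = 0.
  move: (key H 0 4 1); rewrite !big_ord_recr big_ord0 /= ?qf0 ?qf1 ?qf2 ?qf3 ?qf4 ?qf5 ?qf6 ?qf7 ?Xrow ?Xev //=.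
  move=> E; lra.

have E051 : - (1) * Fe f 7 1 = 0.
  move: (key H 0 5 1); rewrite !big_ord_recr big_ord0 /= ?qf0 ?qf1 ?qf2 ?qf3 ?qf4 ?qf5 ?qf6 ?qf7 ?Xrow ?Xev //=.
  move=> E; lra.

have E022 : - (1) * Fe f 3 2 = 0.
  move: (key H 0 2 2); rewrite !big_ord_recr big_ord0 /= ?qf0 ?qf1 ?qf2 ?qf3 ?qf4 ?qf5 ?qf6 ?qf7 ?Xrow ?Xev //=.
  move=> E; lra.

have E122 : - (1) * Fe f 4 2 = 0.
  move: (key H 1 2 2); rewrite !big_ord_recr big_ord0 /= ?qf0 ?qf1 ?qf2 ?qf3 ?qf4 ?qf5 ?qf6 ?qf7 ?Xrow ?Xev //=.
  move=> E; lra.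

have E032 : (2) * b * Fe f 7 2 - (3) * Fe f 5 2 = 0.
  move: (key H 0 3 2); rewrite !big_ord_recr big_ord0 /= ?qf0 ?qf1 ?qf2 ?qf3 ?qf4 ?qf5 ?qf6 ?qf7 ?Xrow ?Xev //=.
  move=> E; lra.

have E042 : - (1) * Fe f 6 2 = 0.
  move: (key H 0 4 2); rewrite !big_ord_recr big_ord0 /= ?qf0 ?qf1 ?qf2 ?qf3 ?qf4 ?qf5 ?qf6 ?qf7 ?Xrow ?Xev //=.
  move=> E; lra.

have E052 : - (1) * Fe f 7 2 = 0.
  move: (key H 0 5 2); rewrite !big_ord_recr big_ord0 /= ?qf0 ?qf1 ?qf2 ?qf3 ?qf4 ?qf5 ?qf6 ?qf7 ?Xrow ?Xev //=.
  move=> E; lra.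

have z70 : Fe f 7 0 = 0 by lra.
rewrite z70 in E030.
have z71 : Fe f 7 1 = 0 by lra.
rewrite z71 in E031.
have z72 : Fe f 7 2 = 0 by lra.
rewrite z72 in E032.
move=> i j /andP[hi1 hi2] hj.
case: i hi1 hi2 => [|[|[|[|[|[|[|[|i]]]]]]]] //= _ _; case: j hj => [|[|[|j]]] //= _; lra.
Qed.

Lemma iso_inv a b a' b' f : f \in unitmx -> iso a b a' b' f -> iso a' b' a b (invmx f).
Proof.
move=> u H x y.
have := H (x *m invmx f) (y *m invmx f).
rewrite !(mulmxKV u) => ->.
by rewrite (mulmxK u).
Qed.

Lemma prod3 f g : f *m g = 1%:M ->
  (forall i j, (3 <= i < 8)%N -> (j < 3)%N -> Fe g i j = 0) ->
  forall i j, (i < 3)%N -> (j < 3)%N ->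
  Fe f i 0 * Fe g 0 j + Fe f i 1 * Fe g 1 j + Fe f i 2 * Fe g 2 j = (i == j)%:R.
Proof.
move=> fg Zg i j hi hj.
have := congr1 (fun M : 'M[R]_8 => M (ix i) (ix j)) fg.
rewrite /= mxE (eq_bigr (fun n : 'I_8 => Fe f i n * Fe g n j)); last first.
  by move=> n _; rewrite /Fe /ix inord_val.
rewrite !big_ord_recr big_ord0 /= mxE eqix; [|exact: (leq_trans hi)|exact: (leq_trans hj)].
rewrite (Zg 3%N j) // (Zg 4%N j) // (Zg 5%N j) // (Zg 6%N j) // (Zg 7%N j) //.
by rewrite !mulr0 !addr0 add0r.
Qed.

End S.

Lemma lc4 (R : realType) (G l1 l2 l3 l4 : R) {x1 x2 x3 x4 : R} : x1 = 0 -> x2 = 0 -> x3 = 0 -> x4 = 0 ->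
  G = l1 * x1 + l2 * x2 + l3 * x3 + l4 * x4 -> G = 0.
Proof. by move=> -> -> -> -> ->; rewrite !mulr0 !addr0. Qed.

Theorem proposition3p1 (R : realType) (a b a' b' : R) :
  lie_isomorphic a b a' b' ->
  exists rho : R, rho != 0 /\ (a' = rho * a \/ a' = - (rho * a)) /\ b' = rho * b.
Proof.
move=> [f [uf H0]].
have H : iso a b a' b' f := H0.
set g := invmx f.
have Hg : iso a' b' a b g := iso_inv uf H.
have Zf := zero3 H.
have Zg := zero3 Hg.
have AG := prod3 (mulmxV uf) Zg.
have GA := prod3 (mulVmx uf) Zf.
have z30 : Fe f 3 0 = 0 by apply: Zf.
have z31 : Fe f 3 1 = 0 by apply: Zf.
have z32 : Fe f 3 2 = 0 by apply: Zf.
have z40 : Fe f 4 0 = 0 by apply: Zf.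
have z41 : Fe f 4 1 = 0 by apply: Zf.
have z42 : Fe f 4 2 = 0 by apply: Zf.
have z50 : Fe f 5 0 = 0 by apply: Zf.
have z51 : Fe f 5 1 = 0 by apply: Zf.
have z52 : Fe f 5 2 = 0 by apply: Zf.
have z60 : Fe f 6 0 = 0 by apply: Zf.
have z61 : Fe f 6 1 = 0 by apply: Zf.
have z62 : Fe f 6 2 = 0 by apply: Zf.
have z70 : Fe f 7 0 = 0 by apply: Zf.
have z71 : Fe f 7 1 = 0 by apply: Zf.
have z72 : Fe f 7 2 = 0 by apply: Zf.
have E053 : - (1) * Fe f 7 3 = 0.
  move: (key H 0 5 3); rewrite !big_ord_recr big_ord0 /= ?qf0 ?qf1 ?qf2 ?qf3 ?qf4 ?qf5 ?qf6 ?qf7 ?Xrow ?Xev //=.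
  rewrite ?z30 ?z31 ?z32 ?z40 ?z41 ?z42 ?z50 ?z51 ?z52 ?z60 ?z61 ?z62 ?z70 ?z71 ?z72.
  move=> E; clear -E; lra.

have E054 : - (1) * Fe f 7 4 = 0.
  move: (key H 0 5 4); rewrite !big_ord_recr big_ord0 /= ?qf0 ?qf1 ?qf2 ?qf3 ?qf4 ?qf5 ?qf6 ?qf7 ?Xrow ?Xev //=.
  rewrite ?z30 ?z31 ?z32 ?z40 ?z41 ?z42 ?z50 ?z51 ?z52 ?z60 ?z61 ?z62 ?z70 ?z71 ?z72.
  move=> E; clear -E; lra.

have E043 : - (1) * Fe f 6 3 = 0.
  move: (key H 0 4 3); rewrite !big_ord_recr big_ord0 /= ?qf0 ?qf1 ?qf2 ?qf3 ?qf4 ?qf5 ?qf6 ?qf7 ?Xrow ?Xev //=.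
  rewrite ?z30 ?z31 ?z32 ?z40 ?z41 ?z42 ?z50 ?z51 ?z52 ?z60 ?z61 ?z62 ?z70 ?z71 ?z72.
  move=> E; clear -E; lra.

have E044 : - (1) * Fe f 6 4 = 0.
  move: (key H 0 4 4); rewrite !big_ord_recr big_ord0 /= ?qf0 ?qf1 ?qf2 ?qf3 ?qf4 ?qf5 ?qf6 ?qf7 ?Xrow ?Xev //=.
  rewrite ?z30 ?z31 ?z32 ?z40 ?z41 ?z42 ?z50 ?z51 ?z52 ?z60 ?z61 ?z62 ?z70 ?z71 ?z72.
  move=> E; clear -E; lra.

have z73 : Fe f 7 3 = 0 by clear -E053; lra.
have z74 : Fe f 7 4 = 0 by clear -E054; lra.
have z63 : Fe f 6 3 = 0 by clear -E043; lra.
have z64 : Fe f 6 4 = 0 by clear -E044; lra.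
have E033 : - (3) * Fe f 5 3 = 0.
  move: (key H 0 3 3); rewrite !big_ord_recr big_ord0 /= ?qf0 ?qf1 ?qf2 ?qf3 ?qf4 ?qf5 ?qf6 ?qf7 ?Xrow ?Xev //=.
  rewrite ?z30 ?z31 ?z32 ?z40 ?z41 ?z42 ?z50 ?z51 ?z52 ?z60 ?z61 ?z62 ?z70 ?z71 ?z72 ?z73 ?z74 ?z63 ?z64.
  move=> E; clear -E; lra.

have E034 : - (3) * Fe f 5 4 = 0.
  move: (key H 0 3 4); rewrite !big_ord_recr big_ord0 /= ?qf0 ?qf1 ?qf2 ?qf3 ?qf4 ?qf5 ?qf6 ?qf7 ?Xrow ?Xev //=.
  rewrite ?z30 ?z31 ?z32 ?z40 ?z41 ?z42 ?z50 ?z51 ?z52 ?z60 ?z61 ?z62 ?z70 ?z71 ?z72 ?z73 ?z74 ?z63 ?z64.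
  move=> E; clear -E; lra.

have z53 : Fe f 5 3 = 0 by clear -E033; lra.
have z54 : Fe f 5 4 = 0 by clear -E034; lra.
have E055 : - (1) * Fe f 7 5 = 0.
  move: (key H 0 5 5); rewrite !big_ord_recr big_ord0 /= ?qf0 ?qf1 ?qf2 ?qf3 ?qf4 ?qf5 ?qf6 ?qf7 ?Xrow ?Xev //=.
  rewrite ?z30 ?z31 ?z32 ?z40 ?z41 ?z42 ?z50 ?z51 ?z52 ?z60 ?z61 ?z62 ?z70 ?z71 ?z72 ?z73 ?z74 ?z63 ?z64 ?z53 ?z54.
  move=> E; clear -E; lra.

have E056 : - (1) * Fe f 7 6 = 0.
  move: (key H 0 5 6); rewrite !big_ord_recr big_ord0 /= ?qf0 ?qf1 ?qf2 ?qf3 ?qf4 ?qf5 ?qf6 ?qf7 ?Xrow ?Xev //=.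
  rewrite ?z30 ?z31 ?z32 ?z40 ?z41 ?z42 ?z50 ?z51 ?z52 ?z60 ?z61 ?z62 ?z70 ?z71 ?z72 ?z73 ?z74 ?z63 ?z64 ?z53 ?z54.
  move=> E; clear -E; lra.

have E013 : (1) * Fe f 0 0 * Fe f 1 2 - (1) * Fe f 0 2 * Fe f 1 0 = 0.
  move: (key H 0 1 3); rewrite !big_ord_recr big_ord0 /= ?qf0 ?qf1 ?qf2 ?qf3 ?qf4 ?qf5 ?qf6 ?qf7 ?Xrow ?Xev //=.
  rewrite ?z30 ?z31 ?z32 ?z40 ?z41 ?z42 ?z50 ?z51 ?z52 ?z60 ?z61 ?z62 ?z70 ?z71 ?z72 ?z73 ?z74 ?z63 ?z64 ?z53 ?z54.
  move=> E; clear -E; lra.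

have E014 : (1) * Fe f 0 1 * Fe f 1 2 - (1) * Fe f 0 2 * Fe f 1 1 = 0.
  move: (key H 0 1 4); rewrite !big_ord_recr big_ord0 /= ?qf0 ?qf1 ?qf2 ?qf3 ?qf4 ?qf5 ?qf6 ?qf7 ?Xrow ?Xev //=.
  rewrite ?z30 ?z31 ?z32 ?z40 ?z41 ?z42 ?z50 ?z51 ?z52 ?z60 ?z61 ?z62 ?z70 ?z71 ?z72 ?z73 ?z74 ?z63 ?z64 ?z53 ?z54.
  move=> E; clear -E; lra.

have z75 : Fe f 7 5 = 0 by clear -E055; lra.
have z76 : Fe f 7 6 = 0 by clear -E056; lra.
have P00 : Fe f 0 0 * Fe g 0 0 + Fe f 0 1 * Fe g 1 0 + Fe f 0 2 * Fe g 2 0 - 1 = 0 by rewrite (AG 0%N 0%N) // subrr.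
have P10 : Fe f 1 0 * Fe g 0 0 + Fe f 1 1 * Fe g 1 0 + Fe f 1 2 * Fe g 2 0 = 0 by rewrite (AG 1%N 0%N).
have P01 : Fe f 0 0 * Fe g 0 1 + Fe f 0 1 * Fe g 1 1 + Fe f 0 2 * Fe g 2 1 = 0 by rewrite (AG 0%N 1%N).
have P11 : Fe f 1 0 * Fe g 0 1 + Fe f 1 1 * Fe g 1 1 + Fe f 1 2 * Fe g 2 1 - 1 = 0 by rewrite (AG 1%N 1%N) // subrr.
have z12 : Fe f 1 2 = 0.
  apply: (@lc4 R _ (Fe g 0 0) (Fe g 1 0) (- Fe f 1 2) (Fe f 0 2) _ _ _ _ E013 E014 P00 P10); ring.
have z02 : Fe f 0 2 = 0.
  apply: (@lc4 R _ (- Fe g 0 1) (- Fe g 1 1) (Fe f 1 2) (- Fe f 0 2) _ _ _ _ E013 E014 P01 P11); ring.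


have E023 : (1) * Fe f 0 0 * Fe f 2 2 - (1) * Fe f 3 3 = 0.
  move: (key H 0 2 3); rewrite !big_ord_recr big_ord0 /= ?qf0 ?qf1 ?qf2 ?qf3 ?qf4 ?qf5 ?qf6 ?qf7 ?Xrow ?Xev //=.
  rewrite ?z30 ?z31 ?z32 ?z40 ?z41 ?z42 ?z50 ?z51 ?z52 ?z60 ?z61 ?z62 ?z70 ?z71 ?z72 ?z73 ?z74 ?z63 ?z64 ?z53 ?z54 ?z75 ?z76 ?z02 ?z12.
  move=> E; clear -E; lra.

have E024 : (1) * Fe f 0 1 * Fe f 2 2 - (1) * Fe f 3 4 = 0.
  move: (key H 0 2 4); rewrite !big_ord_recr big_ord0 /= ?qf0 ?qf1 ?qf2 ?qf3 ?qf4 ?qf5 ?qf6 ?qf7 ?Xrow ?Xev //=.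
  rewrite ?z30 ?z31 ?z32 ?z40 ?z41 ?z42 ?z50 ?z51 ?z52 ?z60 ?z61 ?z62 ?z70 ?z71 ?z72 ?z73 ?z74 ?z63 ?z64 ?z53 ?z54 ?z75 ?z76 ?z02 ?z12.
  move=> E; clear -E; lra.

have E123 : (1) * Fe f 1 0 * Fe f 2 2 - (1) * Fe f 4 3 = 0.
  move: (key H 1 2 3); rewrite !big_ord_recr big_ord0 /= ?qf0 ?qf1 ?qf2 ?qf3 ?qf4 ?qf5 ?qf6 ?qf7 ?Xrow ?Xev //=.
  rewrite ?z30 ?z31 ?z32 ?z40 ?z41 ?z42 ?z50 ?z51 ?z52 ?z60 ?z61 ?z62 ?z70 ?z71 ?z72 ?z73 ?z74 ?z63 ?z64 ?z53 ?z54 ?z75 ?z76 ?z02 ?z12.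
  move=> E; clear -E; lra.

have E124 : (1) * Fe f 1 1 * Fe f 2 2 - (1) * Fe f 4 4 = 0.
  move: (key H 1 2 4); rewrite !big_ord_recr big_ord0 /= ?qf0 ?qf1 ?qf2 ?qf3 ?qf4 ?qf5 ?qf6 ?qf7 ?Xrow ?Xev //=.
  rewrite ?z30 ?z31 ?z32 ?z40 ?z41 ?z42 ?z50 ?z51 ?z52 ?z60 ?z61 ?z62 ?z70 ?z71 ?z72 ?z73 ?z74 ?z63 ?z64 ?z53 ?z54 ?z75 ?z76 ?z02 ?z12.
  move=> E; clear -E; lra.

have E035 : (3) * Fe f 0 0 * Fe f 3 3 + (1) * Fe f 0 1 * Fe f 3 4 - (3) * Fe f 5 5 = 0.
  move: (key H 0 3 5); rewrite !big_ord_recr big_ord0 /= ?qf0 ?qf1 ?qf2 ?qf3 ?qf4 ?qf5 ?qf6 ?qf7 ?Xrow ?Xev //=.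
  rewrite ?z30 ?z31 ?z32 ?z40 ?z41 ?z42 ?z50 ?z51 ?z52 ?z60 ?z61 ?z62 ?z70 ?z71 ?z72 ?z73 ?z74 ?z63 ?z64 ?z53 ?z54 ?z75 ?z76 ?z02 ?z12.
  move=> E; clear -E; lra.

have E145 : (3) * Fe f 1 0 * Fe f 4 3 + (1) * Fe f 1 1 * Fe f 4 4 - (1) * Fe f 5 5 = 0.
  move: (key H 1 4 5); rewrite !big_ord_recr big_ord0 /= ?qf0 ?qf1 ?qf2 ?qf3 ?qf4 ?qf5 ?qf6 ?qf7 ?Xrow ?Xev //=.
  rewrite ?z30 ?z31 ?z32 ?z40 ?z41 ?z42 ?z50 ?z51 ?z52 ?z60 ?z61 ?z62 ?z70 ?z71 ?z72 ?z73 ?z74 ?z63 ?z64 ?z53 ?z54 ?z75 ?z76 ?z02 ?z12.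
  move=> E; clear -E; lra.

have E036 : (1) * Fe f 0 0 * Fe f 3 4 + (1) * Fe f 0 1 * Fe f 3 3 - (3) * Fe f 5 6 = 0.
  move: (key H 0 3 6); rewrite !big_ord_recr big_ord0 /= ?qf0 ?qf1 ?qf2 ?qf3 ?qf4 ?qf5 ?qf6 ?qf7 ?Xrow ?Xev //=.
  rewrite ?z30 ?z31 ?z32 ?z40 ?z41 ?z42 ?z50 ?z51 ?z52 ?z60 ?z61 ?z62 ?z70 ?z71 ?z72 ?z73 ?z74 ?z63 ?z64 ?z53 ?z54 ?z75 ?z76 ?z02 ?z12.
  move=> E; clear -E; lra.

have E146 : (1) * Fe f 1 0 * Fe f 4 4 + (1) * Fe f 1 1 * Fe f 4 3 - (1) * Fe f 5 6 = 0.
  move: (key H 1 4 6); rewrite !big_ord_recr big_ord0 /= ?qf0 ?qf1 ?qf2 ?qf3 ?qf4 ?qf5 ?qf6 ?qf7 ?Xrow ?Xev //=.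
  rewrite ?z30 ?z31 ?z32 ?z40 ?z41 ?z42 ?z50 ?z51 ?z52 ?z60 ?z61 ?z62 ?z70 ?z71 ?z72 ?z73 ?z74 ?z63 ?z64 ?z53 ?z54 ?z75 ?z76 ?z02 ?z12.
  move=> E; clear -E; lra.

have E045 : (3) * Fe f 0 0 * Fe f 4 3 + (1) * Fe f 0 1 * Fe f 4 4 - (1) * Fe f 6 5 = 0.
  move: (key H 0 4 5); rewrite !big_ord_recr big_ord0 /= ?qf0 ?qf1 ?qf2 ?qf3 ?qf4 ?qf5 ?qf6 ?qf7 ?Xrow ?Xev //=.
  rewrite ?z30 ?z31 ?z32 ?z40 ?z41 ?z42 ?z50 ?z51 ?z52 ?z60 ?z61 ?z62 ?z70 ?z71 ?z72 ?z73 ?z74 ?z63 ?z64 ?z53 ?z54 ?z75 ?z76 ?z02 ?z12.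
  move=> E; clear -E; lra.

have E046 : (1) * Fe f 0 0 * Fe f 4 4 + (1) * Fe f 0 1 * Fe f 4 3 - (1) * Fe f 6 6 = 0.
  move: (key H 0 4 6); rewrite !big_ord_recr big_ord0 /= ?qf0 ?qf1 ?qf2 ?qf3 ?qf4 ?qf5 ?qf6 ?qf7 ?Xrow ?Xev //=.
  rewrite ?z30 ?z31 ?z32 ?z40 ?z41 ?z42 ?z50 ?z51 ?z52 ?z60 ?z61 ?z62 ?z70 ?z71 ?z72 ?z73 ?z74 ?z63 ?z64 ?z53 ?z54 ?z75 ?z76 ?z02 ?z12.
  move=> E; clear -E; lra.

have E235 : (3) * Fe f 2 0 * Fe f 3 3 + (1) * Fe f 2 1 * Fe f 3 4 - (2) * Fe f 2 2 * Fe f 3 4 - (2) * Fe f 6 5 = 0.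
  move: (key H 2 3 5); rewrite !big_ord_recr big_ord0 /= ?qf0 ?qf1 ?qf2 ?qf3 ?qf4 ?qf5 ?qf6 ?qf7 ?Xrow ?Xev //=.
  rewrite ?z30 ?z31 ?z32 ?z40 ?z41 ?z42 ?z50 ?z51 ?z52 ?z60 ?z61 ?z62 ?z70 ?z71 ?z72 ?z73 ?z74 ?z63 ?z64 ?z53 ?z54 ?z75 ?z76 ?z02 ?z12.
  move=> E; clear -E; lra.

have E236 : (1) * Fe f 2 0 * Fe f 3 4 + (1) * Fe f 2 1 * Fe f 3 3 + (2) * Fe f 2 2 * Fe f 3 3 - (2) * Fe f 6 6 = 0.
  move: (key H 2 3 6); rewrite !big_ord_recr big_ord0 /= ?qf0 ?qf1 ?qf2 ?qf3 ?qf4 ?qf5 ?qf6 ?qf7 ?Xrow ?Xev //=.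
  rewrite ?z30 ?z31 ?z32 ?z40 ?z41 ?z42 ?z50 ?z51 ?z52 ?z60 ?z61 ?z62 ?z70 ?z71 ?z72 ?z73 ?z74 ?z63 ?z64 ?z53 ?z54 ?z75 ?z76 ?z02 ?z12.
  move=> E; clear -E; lra.

have E245 : (3) * Fe f 2 0 * Fe f 4 3 + (1) * Fe f 2 1 * Fe f 4 4 - (2) * Fe f 2 2 * Fe f 4 4 + (2) * Fe f 5 5 = 0.
  move: (key H 2 4 5); rewrite !big_ord_recr big_ord0 /= ?qf0 ?qf1 ?qf2 ?qf3 ?qf4 ?qf5 ?qf6 ?qf7 ?Xrow ?Xev //=.
  rewrite ?z30 ?z31 ?z32 ?z40 ?z41 ?z42 ?z50 ?z51 ?z52 ?z60 ?z61 ?z62 ?z70 ?z71 ?z72 ?z73 ?z74 ?z63 ?z64 ?z53 ?z54 ?z75 ?z76 ?z02 ?z12.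
  move=> E; clear -E; lra.

have E246 : (1) * Fe f 2 0 * Fe f 4 4 + (1) * Fe f 2 1 * Fe f 4 3 + (2) * Fe f 2 2 * Fe f 4 3 + (2) * Fe f 5 6 = 0.
  move: (key H 2 4 6); rewrite !big_ord_recr big_ord0 /= ?qf0 ?qf1 ?qf2 ?qf3 ?qf4 ?qf5 ?qf6 ?qf7 ?Xrow ?Xev //=.
  rewrite ?z30 ?z31 ?z32 ?z40 ?z41 ?z42 ?z50 ?z51 ?z52 ?z60 ?z61 ?z62 ?z70 ?z71 ?z72 ?z73 ?z74 ?z63 ?z64 ?z53 ?z54 ?z75 ?z76 ?z02 ?z12.
  move=> E; clear -E; lra.

have E257 : (1) * Fe f 2 0 * Fe f 5 5 + (1) * Fe f 2 1 * Fe f 5 6 = 0.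
  move: (key H 2 5 7); rewrite !big_ord_recr big_ord0 /= ?qf0 ?qf1 ?qf2 ?qf3 ?qf4 ?qf5 ?qf6 ?qf7 ?Xrow ?Xev //=.
  rewrite ?z30 ?z31 ?z32 ?z40 ?z41 ?z42 ?z50 ?z51 ?z52 ?z60 ?z61 ?z62 ?z70 ?z71 ?z72 ?z73 ?z74 ?z63 ?z64 ?z53 ?z54 ?z75 ?z76 ?z02 ?z12.
  move=> E; clear -E; lra.

have E267 : (1) * Fe f 2 0 * Fe f 6 5 + (1) * Fe f 2 1 * Fe f 6 6 = 0.
  move: (key H 2 6 7); rewrite !big_ord_recr big_ord0 /= ?qf0 ?qf1 ?qf2 ?qf3 ?qf4 ?qf5 ?qf6 ?qf7 ?Xrow ?Xev //=.
  rewrite ?z30 ?z31 ?z32 ?z40 ?z41 ?z42 ?z50 ?z51 ?z52 ?z60 ?z61 ?z62 ?z70 ?z71 ?z72 ?z73 ?z74 ?z63 ?z64 ?z53 ?z54 ?z75 ?z76 ?z02 ?z12.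
  move=> E; clear -E; lra.

have E057 : (1) * Fe f 0 0 * Fe f 5 5 + (1) * Fe f 0 1 * Fe f 5 6 - (1) * Fe f 7 7 = 0.
  move: (key H 0 5 7); rewrite !big_ord_recr big_ord0 /= ?qf0 ?qf1 ?qf2 ?qf3 ?qf4 ?qf5 ?qf6 ?qf7 ?Xrow ?Xev //=.
  rewrite ?z30 ?z31 ?z32 ?z40 ?z41 ?z42 ?z50 ?z51 ?z52 ?z60 ?z61 ?z62 ?z70 ?z71 ?z72 ?z73 ?z74 ?z63 ?z64 ?z53 ?z54 ?z75 ?z76 ?z02 ?z12.
  move=> E; clear -E; lra.

have E157 : (1) * Fe f 1 0 * Fe f 5 5 + (1) * Fe f 1 1 * Fe f 5 6 = 0.
  move: (key H 1 5 7); rewrite !big_ord_recr big_ord0 /= ?qf0 ?qf1 ?qf2 ?qf3 ?qf4 ?qf5 ?qf6 ?qf7 ?Xrow ?Xev //=.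
  rewrite ?z30 ?z31 ?z32 ?z40 ?z41 ?z42 ?z50 ?z51 ?z52 ?z60 ?z61 ?z62 ?z70 ?z71 ?z72 ?z73 ?z74 ?z63 ?z64 ?z53 ?z54 ?z75 ?z76 ?z02 ?z12.
  move=> E; clear -E; lra.

have E067 : (1) * Fe f 0 0 * Fe f 6 5 + (1) * Fe f 0 1 * Fe f 6 6 = 0.
  move: (key H 0 6 7); rewrite !big_ord_recr big_ord0 /= ?qf0 ?qf1 ?qf2 ?qf3 ?qf4 ?qf5 ?qf6 ?qf7 ?Xrow ?Xev //=.
  rewrite ?z30 ?z31 ?z32 ?z40 ?z41 ?z42 ?z50 ?z51 ?z52 ?z60 ?z61 ?z62 ?z70 ?z71 ?z72 ?z73 ?z74 ?z63 ?z64 ?z53 ?z54 ?z75 ?z76 ?z02 ?z12.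
  move=> E; clear -E; lra.

have E167 : (1) * Fe f 1 0 * Fe f 6 5 + (1) * Fe f 1 1 * Fe f 6 6 - (1) * Fe f 7 7 = 0.
  move: (key H 1 6 7); rewrite !big_ord_recr big_ord0 /= ?qf0 ?qf1 ?qf2 ?qf3 ?qf4 ?qf5 ?qf6 ?qf7 ?Xrow ?Xev //=.
  rewrite ?z30 ?z31 ?z32 ?z40 ?z41 ?z42 ?z50 ?z51 ?z52 ?z60 ?z61 ?z62 ?z70 ?z71 ?z72 ?z73 ?z74 ?z63 ?z64 ?z53 ?z54 ?z75 ?z76 ?z02 ?z12.
  move=> E; clear -E; lra.

have E347 : - (2) * Fe f 3 3 * Fe f 4 4 + (2) * Fe f 3 4 * Fe f 4 3 + (2) * Fe f 7 7 = 0.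
  move: (key H 3 4 7); rewrite !big_ord_recr big_ord0 /= ?qf0 ?qf1 ?qf2 ?qf3 ?qf4 ?qf5 ?qf6 ?qf7 ?Xrow ?Xev //=.
  rewrite ?z30 ?z31 ?z32 ?z40 ?z41 ?z42 ?z50 ?z51 ?z52 ?z60 ?z61 ?z62 ?z70 ?z71 ?z72 ?z73 ?z74 ?z63 ?z64 ?z53 ?z54 ?z75 ?z76 ?z02 ?z12.
  move=> E; clear -E; lra.

have E015 : - (2) * a * Fe f 6 5 + (3) * Fe f 0 0 * Fe f 1 3 + (1) * Fe f 0 1 * Fe f 1 4 - (3) * Fe f 0 3 * Fe f 1 0 - (1) * Fe f 0 4 * Fe f 1 1 = 0.
  move: (key H 0 1 5); rewrite !big_ord_recr big_ord0 /= ?qf0 ?qf1 ?qf2 ?qf3 ?qf4 ?qf5 ?qf6 ?qf7 ?Xrow ?Xev //=.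
  rewrite ?z30 ?z31 ?z32 ?z40 ?z41 ?z42 ?z50 ?z51 ?z52 ?z60 ?z61 ?z62 ?z70 ?z71 ?z72 ?z73 ?z74 ?z63 ?z64 ?z53 ?z54 ?z75 ?z76 ?z02 ?z12.
  move=> E; clear -E; lra.

have E037 : (2) * b * Fe f 7 7 - (2) * b' * Fe f 0 0 * Fe f 3 3 - (2) * b' * Fe f 0 1 * Fe f 3 4 + (1) * Fe f 0 0 * Fe f 3 5 + (1) * Fe f 0 1 * Fe f 3 6 - (2) * Fe f 0 3 * Fe f 3 4 + (2) * Fe f 0 4 * Fe f 3 3 - (3) * Fe f 5 7 = 0.
  move: (key H 0 3 7); rewrite !big_ord_recr big_ord0 /= ?qf0 ?qf1 ?qf2 ?qf3 ?qf4 ?qf5 ?qf6 ?qf7 ?Xrow ?Xev //=.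
  rewrite ?z30 ?z31 ?z32 ?z40 ?z41 ?z42 ?z50 ?z51 ?z52 ?z60 ?z61 ?z62 ?z70 ?z71 ?z72 ?z73 ?z74 ?z63 ?z64 ?z53 ?z54 ?z75 ?z76 ?z02 ?z12.
  move=> E; clear -E; lra.

have E025 : (3) * Fe f 0 0 * Fe f 2 3 + (1) * Fe f 0 1 * Fe f 2 4 - (3) * Fe f 0 3 * Fe f 2 0 - (1) * Fe f 0 4 * Fe f 2 1 + (2) * Fe f 0 4 * Fe f 2 2 - (1) * Fe f 3 5 = 0.
  move: (key H 0 2 5); rewrite !big_ord_recr big_ord0 /= ?qf0 ?qf1 ?qf2 ?qf3 ?qf4 ?qf5 ?qf6 ?qf7 ?Xrow ?Xev //=.
  rewrite ?z30 ?z31 ?z32 ?z40 ?z41 ?z42 ?z50 ?z51 ?z52 ?z60 ?z61 ?z62 ?z70 ?z71 ?z72 ?z73 ?z74 ?z63 ?z64 ?z53 ?z54 ?z75 ?z76 ?z02 ?z12.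
  move=> E; clear -E; lra.

have E247 : - (2) * b' * Fe f 2 0 * Fe f 4 3 - (2) * b' * Fe f 2 1 * Fe f 4 4 + (1) * Fe f 2 0 * Fe f 4 5 + (1) * Fe f 2 1 * Fe f 4 6 - (2) * Fe f 2 3 * Fe f 4 4 + (2) * Fe f 2 4 * Fe f 4 3 + (2) * Fe f 5 7 = 0.
  move: (key H 2 4 7); rewrite !big_ord_recr big_ord0 /= ?qf0 ?qf1 ?qf2 ?qf3 ?qf4 ?qf5 ?qf6 ?qf7 ?Xrow ?Xev //=.
  rewrite ?z30 ?z31 ?z32 ?z40 ?z41 ?z42 ?z50 ?z51 ?z52 ?z60 ?z61 ?z62 ?z70 ?z71 ?z72 ?z73 ?z74 ?z63 ?z64 ?z53 ?z54 ?z75 ?z76 ?z02 ?z12.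
  move=> E; clear -E; lra.

have E147 : (2) * b * Fe f 7 7 - (2) * b' * Fe f 1 0 * Fe f 4 3 - (2) * b' * Fe f 1 1 * Fe f 4 4 + (1) * Fe f 1 0 * Fe f 4 5 + (1) * Fe f 1 1 * Fe f 4 6 - (2) * Fe f 1 3 * Fe f 4 4 + (2) * Fe f 1 4 * Fe f 4 3 - (1) * Fe f 5 7 = 0.
  move: (key H 1 4 7); rewrite !big_ord_recr big_ord0 /= ?qf0 ?qf1 ?qf2 ?qf3 ?qf4 ?qf5 ?qf6 ?qf7 ?Xrow ?Xev //=.
  rewrite ?z30 ?z31 ?z32 ?z40 ?z41 ?z42 ?z50 ?z51 ?z52 ?z60 ?z61 ?z62 ?z70 ?z71 ?z72 ?z73 ?z74 ?z63 ?z64 ?z53 ?z54 ?z75 ?z76 ?z02 ?z12.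
  move=> E; clear -E; lra.

have E126 : (2) * a' * Fe f 1 0 * Fe f 2 1 - (2) * a' * Fe f 1 1 * Fe f 2 0 + (1) * Fe f 1 0 * Fe f 2 4 + (1) * Fe f 1 1 * Fe f 2 3 - (1) * Fe f 1 3 * Fe f 2 1 - (2) * Fe f 1 3 * Fe f 2 2 - (1) * Fe f 1 4 * Fe f 2 0 - (1) * Fe f 4 6 = 0.
  move: (key H 1 2 6); rewrite !big_ord_recr big_ord0 /= ?qf0 ?qf1 ?qf2 ?qf3 ?qf4 ?qf5 ?qf6 ?qf7 ?Xrow ?Xev //=.
  rewrite ?z30 ?z31 ?z32 ?z40 ?z41 ?z42 ?z50 ?z51 ?z52 ?z60 ?z61 ?z62 ?z70 ?z71 ?z72 ?z73 ?z74 ?z63 ?z64 ?z53 ?z54 ?z75 ?z76 ?z02 ?z12.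
  move=> E; clear -E; lra.

have E016 : - (2) * a * Fe f 6 6 + (2) * a' * Fe f 0 0 * Fe f 1 1 - (2) * a' * Fe f 0 1 * Fe f 1 0 + (1) * Fe f 0 0 * Fe f 1 4 + (1) * Fe f 0 1 * Fe f 1 3 - (1) * Fe f 0 3 * Fe f 1 1 - (1) * Fe f 0 4 * Fe f 1 0 = 0.
  move: (key H 0 1 6); rewrite !big_ord_recr big_ord0 /= ?qf0 ?qf1 ?qf2 ?qf3 ?qf4 ?qf5 ?qf6 ?qf7 ?Xrow ?Xev //=.
  rewrite ?z30 ?z31 ?z32 ?z40 ?z41 ?z42 ?z50 ?z51 ?z52 ?z60 ?z61 ?z62 ?z70 ?z71 ?z72 ?z73 ?z74 ?z63 ?z64 ?z53 ?z54 ?z75 ?z76 ?z02 ?z12.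
  move=> E; clear -E; lra.

have E047 : - (2) * b' * Fe f 0 0 * Fe f 4 3 - (2) * b' * Fe f 0 1 * Fe f 4 4 + (1) * Fe f 0 0 * Fe f 4 5 + (1) * Fe f 0 1 * Fe f 4 6 - (2) * Fe f 0 3 * Fe f 4 4 + (2) * Fe f 0 4 * Fe f 4 3 - (1) * Fe f 6 7 = 0.
  move: (key H 0 4 7); rewrite !big_ord_recr big_ord0 /= ?qf0 ?qf1 ?qf2 ?qf3 ?qf4 ?qf5 ?qf6 ?qf7 ?Xrow ?Xev //=.
  rewrite ?z30 ?z31 ?z32 ?z40 ?z41 ?z42 ?z50 ?z51 ?z52 ?z60 ?z61 ?z62 ?z70 ?z71 ?z72 ?z73 ?z74 ?z63 ?z64 ?z53 ?z54 ?z75 ?z76 ?z02 ?z12.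
  move=> E; clear -E; lra.

have E125 : (3) * Fe f 1 0 * Fe f 2 3 + (1) * Fe f 1 1 * Fe f 2 4 - (3) * Fe f 1 3 * Fe f 2 0 - (1) * Fe f 1 4 * Fe f 2 1 + (2) * Fe f 1 4 * Fe f 2 2 - (1) * Fe f 4 5 = 0.
  move: (key H 1 2 5); rewrite !big_ord_recr big_ord0 /= ?qf0 ?qf1 ?qf2 ?qf3 ?qf4 ?qf5 ?qf6 ?qf7 ?Xrow ?Xev //=.
  rewrite ?z30 ?z31 ?z32 ?z40 ?z41 ?z42 ?z50 ?z51 ?z52 ?z60 ?z61 ?z62 ?z70 ?z71 ?z72 ?z73 ?z74 ?z63 ?z64 ?z53 ?z54 ?z75 ?z76 ?z02 ?z12.
  move=> E; clear -E; lra.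

have E237 : - (2) * b' * Fe f 2 0 * Fe f 3 3 - (2) * b' * Fe f 2 1 * Fe f 3 4 + (1) * Fe f 2 0 * Fe f 3 5 + (1) * Fe f 2 1 * Fe f 3 6 - (2) * Fe f 2 3 * Fe f 3 4 + (2) * Fe f 2 4 * Fe f 3 3 - (2) * Fe f 6 7 = 0.
  move: (key H 2 3 7); rewrite !big_ord_recr big_ord0 /= ?qf0 ?qf1 ?qf2 ?qf3 ?qf4 ?qf5 ?qf6 ?qf7 ?Xrow ?Xev //=.
  rewrite ?z30 ?z31 ?z32 ?z40 ?z41 ?z42 ?z50 ?z51 ?z52 ?z60 ?z61 ?z62 ?z70 ?z71 ?z72 ?z73 ?z74 ?z63 ?z64 ?z53 ?z54 ?z75 ?z76 ?z02 ?z12.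
  move=> E; clear -E; lra.

have P00' : Fe f 0 0 * Fe g 0 0 + Fe f 0 1 * Fe g 1 0 = 1.
  by move: (AG 0%N 0%N isT isT); rewrite z02 mul0r addr0 => ->.
have P10' : Fe f 1 0 * Fe g 0 0 + Fe f 1 1 * Fe g 1 0 = 0.
  by move: (AG 1%N 0%N isT isT); rewrite z12 mul0r addr0 => ->.
have P01' : Fe f 0 0 * Fe g 0 1 + Fe f 0 1 * Fe g 1 1 = 0.
  by move: (AG 0%N 1%N isT isT); rewrite z02 mul0r addr0 => ->.
have P11' : Fe f 1 0 * Fe g 0 1 + Fe f 1 1 * Fe g 1 1 = 1.
  by move: (AG 1%N 1%N isT isT); rewrite z12 mul0r addr0 => ->.
have Q22 : Fe g 2 2 * Fe f 2 2 = 1.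
  by move: (GA 2%N 2%N isT isT); rewrite z02 z12 !mulr0 !add0r => ->.
exact: (@alg R a b a' b' _ _ _ _ _ _ _ _ _ _ _ _ _ _ _ _ _ _ _ _ _ _ _ _ _ _ _ _ _ _ _ _ _ P00' P10' P01' P11' Q22 E023 E024 E123 E124 E035 E145 E036 E146 E045 E046 E235 E236 E245 E246 E257 E267 E057 E157 E067 E167 E347 E015 E037 E025 E247 E147 E126 E016 E047 E125 E237).
Qed.
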